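(* Let $\mathcal{E}=\{e_1,\dots,e_n\}$ be an orthonormal basis for $\mathbb{R}^n$ and let $M$ be a $k$-dimensional maximal $\mathcal{E}$-PR subspace with $k<[(n+1)/2]$. Then $k=\min\{|\mathrm{supp}(x)|:0\neq x\in M\}$.
   Context: $[a]$ is the integer part of $a$. For $x=\sum_{i=1}^n\alpha_ie_i$, $\mathrm{supp}(x)=\{i:\alpha_i\neq0\}$. A subspace $M$ is an $\mathcal{E}$-PR subspace if $\{P_Me_i\}_{i=1}^n$ (with $P_M$ the orthogonal projection onto $M$) spans $M$ and whenever $x,y\in M$ satisfy $|\langle x,P_Me_i\rangle|=|\langle y,P_Me_i\rangle|$ for all $i$, then $x=\pm y$. It is maximal if it is not a proper subspace of another $\mathcal{E}$-PR subspace. *)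

(* Defs.v *)
From HB Require Import structures.
From mathcomp Require Import all_boot all_order all_algebra.
From mathcomp Require Import reals.
Set Implicit Arguments. Unset Strict Implicit. Unset Printing Implicit Defensive.
Import Order.TTheory GRing.Theory Num.Theory.
Local Open Scope ring_scope.

(* Vectors of R^n are row vectors 'rV[R]_n; a subspace of R^n is the row
   space of a matrix A : 'M[R]_n (mxalgebra, scope %MS). *)

Definition dotv (R : realType) (n : nat) (u v : 'rV[R]_n) : R := (u *m v^T) 0 0.

Definition orthonormal_basis (R : realType) (n : nat) (e : 'I_n -> 'rV[R]_n) :=
  forall i j : 'I_n, dotv (e i) (e j) = (i == j)%:R.

(* Matrix of the orthogonal projection onto the row space of A (acting on
   row vectors on the right): with B = row_base A (rows form a basis),
   P = B^T (B B^T)^{-1} B. *)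
Definition projmx (R : realType) (n : nat) (A : 'M[R]_n) : 'M[R]_n :=
  let B := row_base A in (B^T *m invmx (B *m B^T)) *m B.

Definition proj (R : realType) (n : nat) (A : 'M[R]_n) (v : 'rV[R]_n) : 'rV[R]_n :=
  v *m projmx A.

Definition E_PR (R : realType) (n : nat) (e : 'I_n -> 'rV[R]_n) (M : 'M[R]_n) : Prop :=
  (\matrix_(i < n) proj M (e i) == M)%MS /\
  forall x y : 'rV[R]_n, (x <= M)%MS -> (y <= M)%MS ->
    (forall i : 'I_n, `|dotv x (proj M (e i))| = `|dotv y (proj M (e i))|) ->
    x = y \/ x = - y.

Definition maximal_E_PR (R : realType) (n : nat) (e : 'I_n -> 'rV[R]_n) (M : 'M[R]_n) : Prop :=
  E_PR e M /\ forall N : 'M[R]_n, E_PR e N -> ~ (M < N)%MS.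

(* supp(x) w.r.t. E: x = sum_i alpha_i e_i with alpha_i = <x, e_i> *)
Definition supp (R : realType) (n : nat) (e : 'I_n -> 'rV[R]_n) (x : 'rV[R]_n) : {set 'I_n} :=
  [set i | dotv x (e i) != 0].

(* Main.v *)
Require Import Defs.
From HB Require Import structures.
From mathcomp Require Import all_boot all_order all_algebra.
From mathcomp Require Import reals.
From mathcomp Require Import zify lra.
From Stdlib Require Import Classical.
Import Order.TTheory GRing.Theory Num.Theory.
Local Open Scope ring_scope.

Section Aux.
Variable R : realType.
Variable n : nat.
Implicit Types (u v w x y : 'rV[R]_n).

Lemma dotvE u v : dotv u v = \sum_j u 0 j * v 0 j.
Proof. by rewrite /dotv !mxE; apply: eq_bigr => j _; rewrite mxE. Qed.

Lemma dotvDl u v w : dotv (u + v) w = dotv u w + dotv v w.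
Proof. by rewrite !dotvE -big_split; apply: eq_bigr => j _; rewrite mxE mulrDl. Qed.

Lemma dotvZl a u w : dotv (a *: u) w = a * dotv u w.
Proof. by rewrite !dotvE mulr_sumr; apply: eq_bigr => j _; rewrite mxE mulrA. Qed.

Lemma dotvNl u w : dotv (- u) w = - dotv u w.
Proof. by rewrite -scaleN1r dotvZl mulN1r. Qed.

Lemma dotv_self_eq0 u : dotv u u = 0 -> u = 0.
Proof.
rewrite dotvE => H; apply/rowP => j; rewrite mxE.
have nn : forall i : 'I_n, predT i -> 0 <= u 0 i * u 0 i.
  by move=> i _; rewrite -expr2 sqr_ge0.
have := psumr_eq0P nn H (i := j) isT.
by move/eqP; rewrite mulf_eq0 orbb => /eqP.
Qed.

Lemma dotv_sub0 (m : nat) (X : 'M[R]_(m, n)) v a :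
  (v <= X)%MS -> X *m a^T = 0 -> dotv v a = 0.
Proof. by move=> /submxP [D ->] H; rewrite /dotv -mulmxA H mulmx0 mxE. Qed.

Lemma nzrow (m p : nat) (A : 'M[R]_(m, p)) : A != 0 -> exists i, row i A != 0.
Proof.
move=> A0; case: (pickP (fun i => row i A != 0)) => [i Hi|H]; first by exists i.
case/eqP: A0; apply/row_matrixP => i; rewrite row0.
by have := H i => /negbFE/eqP.
Qed.

Lemma BBt_unit (r : nat) (B : 'M[R]_(r, n)) : row_free B -> B *m B^T \in unitmx.
Proof.
move=> fB; rewrite -row_free_unit -kermx_eq0.
case: (eqVneq (kermx (B *m B^T)) 0) => // Hk; have [i Hi] := nzrow _ _ _ Hk.
have h : row i (kermx (B *m B^T)) *m (B *m B^T) = 0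
  by rewrite -row_mul mulmx_ker row0.
set w := row i _ in Hi h.
have : w *m B = 0.
  apply: dotv_self_eq0; rewrite /dotv trmx_mul mulmxA -(mulmxA w) h mul0mx.
  by rewrite mxE.
by rewrite -(mul0mx _ B) => /row_free_inj-/(_ fB) w0; rewrite w0 eqxx in Hi.
Qed.

Lemma P1 (m : nat) (A : 'M[R]_(m, n)) (M : 'M[R]_n) :
  (A <= M)%MS -> A *m projmx M = A.
Proof.
rewrite -(eq_row_base M) => /submxP [D ->]; rewrite /projmx.
set B := row_base M.
have u : B *m B^T \in unitmx by rewrite BBt_unit // row_base_free.
clearbody B.
have -> : D *m B *m (B^T *m invmx (B *m B^T) *m B) =
  D *m ((B *m B^T) *m invmx (B *m B^T)) *m B by rewrite !mulmxA.
by rewrite mulmxV // mulmx1.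
Qed.

Lemma P2 (M : 'M[R]_n) : (projmx M)^T = projmx M.
Proof.
rewrite /projmx; set B := row_base M; clearbody B.
by rewrite !trmx_mul !trmxK trmx_inv trmx_mul trmxK mulmxA.
Qed.

Lemma P3 (M : 'M[R]_n) : (projmx M <= M)%MS.
Proof. by apply: submx_trans (submxMl _ _) _; rewrite eq_row_base. Qed.

Lemma proj_dot (N : 'M[R]_n) x v : (x <= N)%MS -> dotv x (proj N v) = dotv x v.
Proof. by move=> xN; rewrite /dotv /proj trmx_mul P2 mulmxA P1. Qed.

Variable e : 'I_n -> 'rV[R]_n.
Hypothesis He : orthonormal_basis e.

Definition Emx := \matrix_i e i.

Lemma EEt : Emx *m Emx^T = 1%:M.
Proof.
apply/matrixP => i j; rewrite !mxE -He dotvE; apply: eq_bigr => l _.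
by rewrite !mxE.
Qed.

Lemma EtE : Emx^T *m Emx = 1%:M.
Proof. exact: mulmx1C EEt. Qed.

Lemma expand x : x = \sum_i dotv x (e i) *: e i.
Proof.
have h : x = x *m Emx^T *m Emx by rewrite -mulmxA EtE mulmx1.
rewrite {1}h mulmx_sum_row; apply: eq_bigr => i _.
by rewrite rowK !mxE dotvE; congr (_ *: _); apply: eq_bigr => j _; rewrite !mxE.
Qed.

Lemma span_proj (N : 'M[R]_n) : (\matrix_(i < n) proj N (e i) == N)%MS.
Proof.
have -> : \matrix_(i < n) proj N (e i) = Emx *m projmx N.
  by apply/row_matrixP => i; rewrite rowK row_mul rowK.
apply/andP; split; first exact: submx_trans (submxMl _ _) (P3 N).
apply: (submx_trans _ (submxMl (N *m Emx^T) (Emx *m projmx N))).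
by rewrite mulmxA -(mulmxA N) EtE mulmx1 P1 // submx_refl.
Qed.

End Aux.



Section Aux2.
Variable R : realType.
Variable n : nat.
Implicit Types (u v w x y : 'rV[R]_n).

Lemma le_sum_seq (F : 'rV[R]_n -> R) (s : seq 'rV[R]_n) b :
  b \in s -> (forall x, 0 <= F x) -> F b <= \sum_(x <- s) F x.
Proof.
elim: s => [//|a s IH]; rewrite in_cons big_cons => /orP [/eqP -> | bs] F0.
  by rewrite lerDl sumr_ge0.
by rewrite (le_trans (IH bs F0)) // lerDr.
Qed.

Lemma avoid (s : seq 'rV[R]_n) :
  all (fun a => a != 0) s -> exists v, all (fun a => dotv v a != 0) s.
Proof.
elim: s => [|a s IH] /=; first by exists 0.
move=> /andP [a0 /IH [v Hv]].
have aa : dotv a a != 0.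
  by apply/eqP => /dotv_self_eq0 h; rewrite h eqxx in a0.
set t := 1 + \sum_(b <- a :: s) `|dotv v b / dotv a b|.
have t0 : 0 < t by rewrite ltr_pwDl // sumr_ge0.
have claim : forall b, b \in a :: s -> (b \in s) || (dotv a b != 0) ->
    dotv v b + t * dotv a b != 0.
  move=> b bas Hb; case: (eqVneq (dotv a b) 0) => [c0|ab].
    rewrite c0 mulr0 addr0; move: Hb; rewrite c0 eqxx orbF => bs.
    exact: (allP Hv b bs).
  apply/eqP => h.
  have ht : t = - dotv v b / dotv a b by rewrite (addr0_eq h) mulfK.
  have e1 : `|dotv v b / dotv a b| = t by rewrite -normrN -mulNr -ht gtr0_norm.
  have := le_sum_seq (fun x => `|dotv v x / dotv a x|) (a :: s) b bas (fun x => normr_ge0 _).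
  rewrite /= e1 {1}/t; lra.
exists (v + t *: a); apply/andP; split.
  by rewrite dotvDl dotvZl claim ?mem_head ?aa ?orbT.
by apply/allP => b bs; rewrite dotvDl dotvZl claim // ?in_cons ?bs ?orbT.
Qed.

End Aux2.



Section Aux3.
Variable R : realType.
Variable n : nat.
Implicit Types (u v w x y : 'rV[R]_n).
Variable e : 'I_n -> 'rV[R]_n.
Hypothesis He : orthonormal_basis e.

Definition RS (S : {set 'I_n}) : 'M[R]_(#|S|, n) := \matrix_(j < #|S|) e (enum_val j).

Lemma e_sub_RS (S : {set 'I_n}) i : i \in S -> (e i <= RS S)%MS.
Proof.
move=> iS; rewrite -(enum_rankK_in iS iS) -(rowK (fun j => e (enum_val j))).
exact: row_sub.
Qed.

Lemma sub_RS u (S : {set 'I_n}) : (forall i, i \notin S -> dotv u (e i) = 0) -> (u <= RS S)%MS.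
Proof.
move=> H; rewrite (@expand _ _ _ He u); apply: summx_sub => i _.
case: (boolP (i \in S)) => iS; first by apply: scalemx_sub; apply: e_sub_RS.
by rewrite H // scale0r sub0mx.
Qed.

Lemma RS_orth (S : {set 'I_n}) y : (y <= kermx (RS S)^T)%MS -> forall i, i \in S -> dotv y (e i) = 0.
Proof.
move=> /sub_kermxP h i /e_sub_RS /submxP [D ->].
by rewrite /dotv trmx_mul mulmxA h mul0mx mxE.
Qed.

Lemma supp_out u i : i \notin supp e u -> dotv u (e i) = 0.
Proof. by rewrite inE negbK => /eqP. Qed.

Definition normal (X : 'M[R]_n) : 'rV[R]_n :=
  if [pick i | row i (kermx X^T) != 0] is Some i then row i (kermx X^T) else 0.

Lemma normal_orth X : X *m (normal X)^T = 0.
Proof.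
rewrite /normal; case: pickP => [i _|_]; last by rewrite trmx0 mulmx0.
by rewrite -[X in X *m _]trmxK -trmx_mul -row_mul mulmx_ker row0 trmx0.
Qed.

Lemma normal_nz X : (\rank X < n)%N -> normal X != 0.
Proof.
move=> hX; have : kermx X^T != 0.
  by rewrite -mxrank_eq0 mxrank_ker mxrank_tr; apply/eqP; lia.
move=> hk; have [i Hi] := nzrow _ _ _ _ hk; rewrite /normal; case: pickP => [j //|H].
by have := H i; rewrite Hi.
Qed.

Lemma r_aux1 (a : R) : a = - a -> a = 0. Proof. lra. Qed.
Lemma r_aux2 (a b : R) : a + b = - (a - b) -> a = 0. Proof. lra. Qed.
Lemma r_aux3 (a b : R) : a + b = a - b -> b = 0. Proof. lra. Qed.

Definition nodisj (N : 'M[R]_n) := forall u w, (u <= N)%MS -> (w <= N)%MS ->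
  (forall i, dotv u (e i) * dotv w (e i) = 0) -> u = 0 \/ w = 0.

Lemma PR_nodisj N : E_PR e N -> nodisj N.
Proof.
move=> [_ H] u w uN wN D.
have wN' : (- w <= N)%MS by rewrite eqmx_opp.
have := H (u + w) (u - w) (addmx_sub uN wN) (addmx_sub uN wN').
case.
- move=> i; rewrite !proj_dot ?(addmx_sub uN wN) ?(addmx_sub uN wN') //.
  rewrite !dotvDl dotvNl; have := D i; move/eqP; rewrite mulf_eq0.
  by case/orP => /eqP ->; rewrite ?add0r ?sub0r ?normrN // addr0 subr0.
- move=> /addrI h; right; apply/rowP => j.
  have := congr1 (fun M : 'rV[R]_n => M 0 j) h; rewrite !mxE; exact: r_aux1.
- move=> h; left; apply/rowP => j.
  have := congr1 (fun M : 'rV[R]_n => M 0 j) h; rewrite !mxE; exact: r_aux2.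
Qed.

Lemma r_aux4 (a b : R) : `|a| = `|b| -> (a + b) * (a - b) = 0.
Proof.
move=> h; have h2 : a ^+ 2 = b ^+ 2
  by rewrite -(real_normK (num_real a)) -(real_normK (num_real b)) h.
have -> : (a + b) * (a - b) = a ^+ 2 - b ^+ 2.
  by rewrite !expr2 mulrDl !mulrBr (mulrC b a) addrA subrK.
by rewrite h2 subrr.
Qed.

Lemma nodisj_PR N : nodisj N -> E_PR e N.
Proof.
move=> nd; split; first exact: (@span_proj _ _ _ He).
move=> x y xN yN H.
have wN' : (- y <= N)%MS by rewrite eqmx_opp.
have := nd (x + y) (x - y) (addmx_sub xN yN) (addmx_sub xN wN').
case.
- move=> i; have := H i; rewrite !proj_dot // !dotvDl dotvNl; exact: r_aux4.
- by move/eqP; rewrite addr_eq0 => /eqP; right.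
- by move/eqP; rewrite subr_eq0 => /eqP; left.
Qed.

End Aux3.



Section Main.
Variable R : realType.
Variable n : nat.
Variable e : 'I_n -> 'rV[R]_n.
Hypothesis He : orthonormal_basis e.
Variable M : 'M[R]_n.
Variable k : nat.
Hypothesis Hrank : \rank M = k.
Hypothesis HPR : E_PR e M.

Local Notation RSe := (@RS R n e).

Lemma part2 x : (x <= M)%MS -> x != 0 -> (k <= #|supp e x|)%N.
Proof.
move=> xM x0; rewrite leqNgt; apply/negP => Hlt.
set S := supp e x.
set K := kermx (RSe S)^T.
set X := (M :&: K)%MS.
have hX : (0 < \rank X)%N.
  have h1 := mxrank_sum_cap M K.
  have h2 := rank_leq_col (M + K)%MS.
  have h3 := rank_leq_row (RSe S).
  have h4 : \rank K = (n - \rank (RSe S))%N by rewrite mxrank_ker mxrank_tr.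
  rewrite -/X in h1; have Hlt2 : (#|S| < k)%N by []; lia.
have : X != 0 by rewrite -mxrank_eq0 -lt0n.
move=> hX0; have [i Hi] := nzrow _ _ _ _ hX0.
set y := row i X in Hi.
have yX : (y <= X)%MS by apply: row_sub.
have yM : (y <= M)%MS by apply: submx_trans yX (capmxSl _ _).
have yK : (y <= K)%MS by apply: submx_trans yX (capmxSr _ _).
have [] := @PR_nodisj _ _ e _ HPR _ _ xM yM.
- move=> j; case: (boolP (j \in S)) => jS.
    by rewrite (@RS_orth _ _ e _ _ yK _ jS) mulr0.
  by rewrite (@supp_out _ _ e _ _ jS) mul0r.
- by move=> h; rewrite h eqxx in x0.
- by move=> h; rewrite h eqxx in Hi.
Qed.

Hypothesis Hmax : forall N : 'M[R]_n, E_PR e N -> ~ (M < N)%MS.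
Hypothesis Hk : (k < (n.+1)./2)%N.

Lemma n2k : (k.*2 < n)%N.
Proof.
have h1 : (k.+1.*2 <= ((n.+1)./2).*2)%N by rewrite leq_double.
rewrite halfK in h1; rewrite -!muln2 in h1 *; lia.
Qed.

Lemma part1 : (forall x, (x <= M)%MS -> x != 0 -> (k < #|supp e x|)%N) -> False.
Proof.
move=> H.
have hn := n2k.
set P := [pred A : {set 'I_n} | (k + #|A| < n)%N].
set s := [seq @normal R n (M + RSe A)%MS | A <- enum P].
have s0 : all (fun a => a != 0) s.
  apply/allP => a /mapP [A]; rewrite mem_enum inE => HS ->.
  apply: normal_nz.
  have [h _] := mxrank_adds_leqif M (RSe A).
  have := rank_leq_row (RSe A); lia.
have [v Hv] := @avoid R n s s0.
have Lv : forall A : {set 'I_n}, (v <= M + RSe A)%MS -> (n <= k + #|A|)%N.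
  move=> A vS; rewrite leqNgt; apply/negP => HS.
  have : @normal R n (M + RSe A)%MS \in s by apply: map_f; rewrite mem_enum inE.
  move/(allP Hv)/negP; apply.
  by apply/eqP; apply: (@dotv_sub0 _ _ _ _ _ _ vS); apply: normal_orth.
set N := (M + v)%MS.
have Alt : forall u, (u <= N)%MS -> (u <= M)%MS \/ (n <= k + #|supp e u|)%N.
  move=> u /sub_addsmxP [[p1 p2] /= Hu].
  set a := p2 0 0.
  have hp : p2 *m v = a *: v by rewrite {1}(mx11_scalar p2) mul_scalar_mx.
  case: (eqVneq a 0) => [a0|a0].
    by left; rewrite Hu hp a0 scale0r addr0; exact: submxMl.
  right; apply: Lv.
  have -> : v = a^-1 *: (u - p1 *m M).
    by rewrite Hu hp [p1 *m M + _]addrC addrK scalerA mulVf // scale1r.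
  apply: scalemx_sub; apply: addmx_sub.
    apply: submx_trans (addsmxSr _ _); apply: (@sub_RS _ _ e He).
    by move=> i; apply: supp_out.
  by rewrite eqmx_opp; exact: submx_trans (submxMl _ _) (addsmxSl _ _).
have MN : (M < N)%MS.
  rewrite ltmxE addsmxSl /=; apply/negP => NM.
  have := Lv set0 (submx_trans (submx_trans (addsmxSr M v) NM) (addsmxSl M (RSe set0))).
  rewrite cards0; lia.
have PRN : E_PR e N.
  apply: (@nodisj_PR _ _ e He) => u w uN wN D.
  case: (eqVneq u 0) => [->|u0]; first by left.
  case: (eqVneq w 0) => [->|w0]; first by right.
  exfalso.
  have card : (#|supp e u| + #|supp e w| <= n)%N.
    have sub : supp e u \subset ~: supp e w.
      apply/subsetP => i; rewrite !inE => ui; apply/negP => wi.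
      by have := D i; move/eqP; rewrite mulf_eq0 (negbTE ui) (negbTE wi).
    have := subset_leq_card sub; have := cardsC (supp e w); rewrite card_ord; lia.
  have [uM|hu] := Alt u uN; have [wM|hw] := Alt w wN.
  - have [] := @PR_nodisj _ _ e _ HPR _ _ uM wM D => h.
      by rewrite h eqxx in u0.
    by rewrite h eqxx in w0.
  - have := H u uM u0; lia.
  - have := H w wM w0; lia.
  - lia.
exact: (Hmax N PRN MN).
Qed.

End Main.

Theorem theorem4p6 (R : realType) (n : nat) (e : 'I_n -> 'rV[R]_n)
  (M : 'M[R]_n) (k : nat) :
  orthonormal_basis e ->
  \rank M = k ->
  maximal_E_PR e M ->
  (k < (n.+1)./2)%N ->
  (exists2 x : 'rV[R]_n, (x <= M)%MS /\ x != 0 & #|supp e x| = k) /\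
  (forall x : 'rV[R]_n, (x <= M)%MS -> x != 0 -> (k <= #|supp e x|)%N).
Proof.
move=> He Hr [HPR Hmax] Hk; split; last first.
  by move=> x xM x0; apply: (@part2 _ _ e M k Hr HPR).
apply: NNPP => hne; apply: (@part1 _ _ e He M k Hr HPR Hmax Hk) => x xM x0.
have := @part2 _ _ e M k Hr HPR x xM x0.
rewrite leq_eqVlt => /orP [/eqP hk|//].
by exfalso; apply: hne; exists x.
Qed.
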